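(* For every bigroupoid $\mathcal B$ there exist an AU-bigroupoid $\mathcal S\mathcal B$ and weak equivalences (biequivalences) $(E,\epsilon):\mathcal S\mathcal B\to\mathcal B$ and $(S,\sigma):\mathcal B\to\mathcal S\mathcal B$.
   Context: A bigroupoid $\mathcal B$ consists of: a set $\mathcal B_0$ of 0-cells; for each $A,B$ a groupoid $\mathcal B(A,B)$ (objects: 1-cells; arrows: 2-cells); composition functors $*$; identity 1-cells $1_A$; inversion functors $(-)^*$; and natural isomorphisms $\mathbf a:(h*g)*f\Rightarrow h*(g*f)$, $\mathbf l:1_B*f\Rightarrow f$, $\mathbf r:f*1_A\Rightarrow f$, $\mathbf e:f^**f\Rightarrow 1_A$, $\mathbf i:1_B\Rightarrow f*f^*$, such that the pentagon for $\mathbf a$ commutes, $(\mathrm{id}*\mathbf l)\circ\mathbf a=\mathbf r*\mathrm{id}$, and $\mathbf r_f\circ(\mathrm{id}*\mathbf e_f)\circ\mathbf a\circ(\mathbf i_f*\mathrm{id})=\mathbf l_f$. An AU-bigroupoid is a bigroupoid in which $\mathbf a,\mathbf l,\mathbf r$ are identities. A morphism $(F,\phi):\mathcal A\to\mathcal B$ consists of a function on 0-cells, functors $F_{A,A'}:\mathcal A(A,A')\to\mathcal B(FA,FA')$ and natural isomorphisms $\phi_{g,f}:Fg*Ff\Rightarrow F(g*f)$, $\phi_A:1_{FA}\Rightarrow F1_A$, $\phi_f:(Ff)^*\Rightarrow F(f^* )$ satisfying $F\mathbf a\circ\phi\circ(\phi*\mathrm{id})=\phi\circ(\mathrm{id}*\phi)\circ\mathbf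 a$, $F\mathbf r\circ\phi\circ(\mathrm{id}*\phi_A)=\mathbf r$, $F\mathbf l\circ\phi\circ(\phi_B*\mathrm{id})=\mathbf l$, $F\mathbf e\circ\phi\circ(\phi_f*\mathrm{id})=\phi_A\circ\mathbf e$, $F\mathbf i\circ\phi_B=\phi\circ(\mathrm{id}*\phi_f)\circ\mathbf i$. A weak equivalence (biequivalence) $F:\mathcal A\to\mathcal B$ is a morphism such that every 0-cell $B$ of $\mathcal B$ admits a 1-cell $B\to FA'$ for some 0-cell $A'$ of $\mathcal A$, and each $F_{A,A'}$ is an equivalence of categories. *)

(* Defs.v *)
Set Implicit Arguments.
Unset Strict Implicit.

(** * Groupoids (2-cells are the arrows; laws hold up to Leibniz equality) *)
Record Groupoid : Type := {
  gob : Type;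
  ghom : gob -> gob -> Type;
  gcomp : forall {x y z : gob}, ghom y z -> ghom x y -> ghom x z;
  gid : forall x : gob, ghom x x;
  ginv : forall {x y : gob}, ghom x y -> ghom y x;
  gcomp_assoc : forall x y z w (h : ghom z w) (g : ghom y z) (f : ghom x y),
      gcomp h (gcomp g f) = gcomp (gcomp h g) f;
  gcomp_id_l : forall x y (f : ghom x y), gcomp (gid y) f = f;
  gcomp_id_r : forall x y (f : ghom x y), gcomp f (gid x) = f;
  ginv_l : forall x y (f : ghom x y), gcomp (ginv f) f = gid x;
  ginv_r : forall x y (f : ghom x y), gcomp f (ginv f) = gid y
}.
Arguments gcomp {_ _ _ _} _ _.
Arguments gid {_} _.
Arguments ginv {_ _ _} _.
Arguments ghom {_} _ _.

Record Functor (C D : Groupoid) : Type := {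
  fob : gob C -> gob D;
  fmap : forall {x y : gob C}, ghom x y -> ghom (fob x) (fob y);
  fmap_id : forall x, fmap (gid x) = gid (fob x);
  fmap_comp : forall x y z (g : ghom y z) (f : ghom x y),
      fmap (gcomp g f) = gcomp (fmap g) (fmap f)
}.
Arguments fob {_ _} _ _.
Arguments fmap {_ _} _ {_ _} _.

Definition id_functor (C : Groupoid) : Functor C C.
Proof.
  refine {| fob := fun x => x; fmap := fun _ _ f => f |}; reflexivity.
Defined.

Definition comp_functor (C D E : Groupoid) (G : Functor D E) (F : Functor C D)
  : Functor C E.
Proof.
  refine {| fob := fun x => fob G (fob F x);
            fmap := fun _ _ f => fmap G (fmap F f) |}.
  - intro x; rewrite fmap_id; apply fmap_id.
  - intros; rewrite fmap_comp; apply fmap_comp.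
Defined.

(** Natural isomorphisms (in a groupoid every component is invertible) *)
Record NatIso (C D : Groupoid) (F G : Functor C D) : Type := {
  ncomp : forall x : gob C, ghom (fob F x) (fob G x);
  nnat : forall x y (f : ghom x y),
      gcomp (ncomp y) (fmap F f) = gcomp (fmap G f) (ncomp x)
}.

Definition IsEquivalence (C D : Groupoid) (F : Functor C D) : Prop :=
  exists G : Functor D C,
    inhabited (NatIso (comp_functor G F) (id_functor C)) /\
    inhabited (NatIso (comp_functor F G) (id_functor D)).

Record Bigroupoid : Type := {
  Ob : Type;
  Hom : Ob -> Ob -> Groupoid;
  hc : forall {A B C : Ob}, gob (Hom B C) -> gob (Hom A B) -> gob (Hom A C);
  hc2 : forall {A B C : Ob} {g g' : gob (Hom B C)} {f f' : gob (Hom A B)},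
      ghom g g' -> ghom f f' -> ghom (hc g f) (hc g' f');
  hc2_id : forall A B C (g : gob (Hom B C)) (f : gob (Hom A B)),
      hc2 (gid g) (gid f) = gid (hc g f);
  hc2_comp : forall A B C (g g' g'' : gob (Hom B C)) (f f' f'' : gob (Hom A B))
      (b' : ghom g' g'') (b : ghom g g') (a' : ghom f' f'') (a : ghom f f'),
      hc2 (gcomp b' b) (gcomp a' a) = gcomp (hc2 b' a') (hc2 b a);
  one : forall A : Ob, gob (Hom A A);
  inv1 : forall {A B : Ob}, gob (Hom A B) -> gob (Hom B A);
  inv2 : forall {A B : Ob} {f f' : gob (Hom A B)}, ghom f f' -> ghom (inv1 f) (inv1 f');
  inv2_id : forall A B (f : gob (Hom A B)), inv2 (gid f) = gid (inv1 f);
  inv2_comp : forall A B (f f' f'' : gob (Hom A B)) (a' : ghom f' f'') (a : ghom f f'),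
      inv2 (gcomp a' a) = gcomp (inv2 a') (inv2 a);
  assoc : forall {A B C D : Ob} (h : gob (Hom C D)) (g : gob (Hom B C)) (f : gob (Hom A B)),
      ghom (hc (hc h g) f) (hc h (hc g f));
  assoc_nat : forall A B C D (h h' : gob (Hom C D)) (g g' : gob (Hom B C))
      (f f' : gob (Hom A B)) (c : ghom h h') (b : ghom g g') (a : ghom f f'),
      gcomp (assoc h' g' f') (hc2 (hc2 c b) a) = gcomp (hc2 c (hc2 b a)) (assoc h g f);
  lu : forall {A B : Ob} (f : gob (Hom A B)), ghom (hc (one B) f) f;
  lu_nat : forall A B (f f' : gob (Hom A B)) (a : ghom f f'),
      gcomp (lu f') (hc2 (gid (one B)) a) = gcomp a (lu f);
  ru : forall {A B : Ob} (f : gob (Hom A B)), ghom (hc f (one A)) f;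
  ru_nat : forall A B (f f' : gob (Hom A B)) (a : ghom f f'),
      gcomp (ru f') (hc2 a (gid (one A))) = gcomp a (ru f);
  ev : forall {A B : Ob} (f : gob (Hom A B)), ghom (hc (inv1 f) f) (one A);
  ev_nat : forall A B (f f' : gob (Hom A B)) (a : ghom f f'),
      gcomp (ev f') (hc2 (inv2 a) a) = gcomp (gid (one A)) (ev f);
  co : forall {A B : Ob} (f : gob (Hom A B)), ghom (one B) (hc f (inv1 f));
  co_nat : forall A B (f f' : gob (Hom A B)) (a : ghom f f'),
      gcomp (co f') (gid (one B)) = gcomp (hc2 a (inv2 a)) (co f);
  pentagon : forall A B C D E (k : gob (Hom D E)) (h : gob (Hom C D))
      (g : gob (Hom B C)) (f : gob (Hom A B)),
      gcomp (hc2 (gid k) (assoc h g f))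
            (gcomp (assoc k (hc h g) f) (hc2 (assoc k h g) (gid f)))
      = gcomp (assoc k h (hc g f)) (assoc (hc k h) g f);
  triangle : forall A B C (g : gob (Hom B C)) (f : gob (Hom A B)),
      gcomp (hc2 (gid g) (lu f)) (assoc g (one B) f) = hc2 (ru g) (gid f);
  zigzag : forall A B (f : gob (Hom A B)),
      gcomp (ru f) (gcomp (hc2 (gid f) (ev f))
        (gcomp (assoc f (inv1 f) f) (hc2 (co f) (gid f)))) = lu f
}.
Arguments hc {_ _ _ _} _ _.
Arguments hc2 {_ _ _ _ _ _ _ _} _ _.
Arguments one {_} _.
Arguments inv1 {_ _ _} _.
Arguments inv2 {_ _ _ _ _} _.
Arguments assoc {_ _ _ _ _} _ _ _.
Arguments lu {_ _ _} _.
Arguments ru {_ _ _} _.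
Arguments ev {_ _ _} _.
Arguments co {_ _ _} _.

Definition cell_of_eq (C : Groupoid) (x y : gob C) (p : x = y) : ghom x y :=
  match p in _ = z return ghom x z with eq_refl => gid x end.

(** AU-bigroupoid: a, l, r are identities (so in particular the 1-cells
    involved coincide). *)
Definition IsAU (B : Bigroupoid) : Prop :=
  (forall (A0 A1 A2 A3 : Ob B) (h : gob (Hom A2 A3)) (g : gob (Hom A1 A2))
      (f : gob (Hom A0 A1)),
      exists p : hc (hc h g) f = hc h (hc g f), assoc h g f = cell_of_eq p) /\
  (forall (A0 A1 : Ob B) (f : gob (Hom A0 A1)),
      exists p : hc (one A1) f = f, lu f = cell_of_eq p) /\
  (forall (A0 A1 : Ob B) (f : gob (Hom A0 A1)),
      exists p : hc f (one A0) = f, ru f = cell_of_eq p).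

Record Morphism (A B : Bigroupoid) : Type := {
  F0 : Ob A -> Ob B;
  F1 : forall X Y : Ob A, Functor (Hom X Y) (Hom (F0 X) (F0 Y));
  phi2 : forall (X Y Z : Ob A) (g : gob (Hom Y Z)) (f : gob (Hom X Y)),
      ghom (hc (fob (F1 Y Z) g) (fob (F1 X Y) f)) (fob (F1 X Z) (hc g f));
  phi2_nat : forall X Y Z (g g' : gob (Hom Y Z)) (f f' : gob (Hom X Y))
      (b : ghom g g') (a : ghom f f'),
      gcomp (fmap (F1 X Z) (hc2 b a)) (phi2 g f)
      = gcomp (phi2 g' f') (hc2 (fmap (F1 Y Z) b) (fmap (F1 X Y) a));
  phi0 : forall X : Ob A, ghom (one (F0 X)) (fob (F1 X X) (one X));
  phiinv : forall (X Y : Ob A) (f : gob (Hom X Y)),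
      ghom (inv1 (fob (F1 X Y) f)) (fob (F1 Y X) (inv1 f));
  phiinv_nat : forall X Y (f f' : gob (Hom X Y)) (a : ghom f f'),
      gcomp (fmap (F1 Y X) (inv2 a)) (phiinv f)
      = gcomp (phiinv f') (inv2 (fmap (F1 X Y) a));
  mor_assoc : forall W X Y Z (h : gob (Hom Y Z)) (g : gob (Hom X Y)) (f : gob (Hom W X)),
      gcomp (fmap (F1 W Z) (assoc h g f))
        (gcomp (phi2 (hc h g) f) (hc2 (phi2 h g) (gid (fob (F1 W X) f))))
      = gcomp (phi2 h (hc g f))
        (gcomp (hc2 (gid (fob (F1 Y Z) h)) (phi2 g f))
          (assoc (fob (F1 Y Z) h) (fob (F1 X Y) g) (fob (F1 W X) f)));
  mor_ru : forall X Y (f : gob (Hom X Y)),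
      gcomp (fmap (F1 X Y) (ru f))
        (gcomp (phi2 f (one X)) (hc2 (gid (fob (F1 X Y) f)) (phi0 X)))
      = ru (fob (F1 X Y) f);
  mor_lu : forall X Y (f : gob (Hom X Y)),
      gcomp (fmap (F1 X Y) (lu f))
        (gcomp (phi2 (one Y) f) (hc2 (phi0 Y) (gid (fob (F1 X Y) f))))
      = lu (fob (F1 X Y) f);
  mor_ev : forall X Y (f : gob (Hom X Y)),
      gcomp (fmap (F1 X X) (ev f))
        (gcomp (phi2 (inv1 f) f) (hc2 (phiinv f) (gid (fob (F1 X Y) f))))
      = gcomp (phi0 X) (ev (fob (F1 X Y) f));
  mor_co : forall X Y (f : gob (Hom X Y)),
      gcomp (fmap (F1 Y Y) (co f)) (phi0 Y)
      = gcomp (phi2 f (inv1 f))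
          (gcomp (hc2 (gid (fob (F1 X Y) f)) (phiinv f)) (co (fob (F1 X Y) f)))
}.

Definition IsWeakEquivalence (A B : Bigroupoid) (F : Morphism A B) : Prop :=
  (forall Y : Ob B, exists X : Ob A, inhabited (gob (Hom Y (F0 F X)))) /\
  (forall X X' : Ob A, IsEquivalence (F1 F X X')).

(* Main.v *)
Require Import Defs.
From Stdlib Require Import ProofIrrelevance.
Set Implicit Arguments.
Unset Strict Implicit.
Local Notation "g ∘ f" := (gcomp g f) (at level 40, left associativity).



Lemma gcancel_l (C : Groupoid) (x y z : gob C) (h : ghom y z) (g g' : ghom x y) :
  h ∘ g = h ∘ g' -> g = g'.
Proof.
  intro H. rewrite <- (gcomp_id_l g), <- (gcomp_id_l g'), <- (ginv_l h),
  <- !gcomp_assoc, H. reflexivity.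
Qed.

Lemma gcancel_r (C : Groupoid) (x y z : gob C) (h : ghom x y) (g g' : ghom y z) :
  g ∘ h = g' ∘ h -> g = g'.
Proof.
  intro H. rewrite <- (gcomp_id_r g), <- (gcomp_id_r g'), <- (ginv_r h),
  !gcomp_assoc, H. reflexivity.
Qed.

Lemma ginv_unique (C : Groupoid) (x y : gob C) (f : ghom x y) (g : ghom y x) :
  g ∘ f = gid x -> ginv f = g.
Proof.
  intro H. apply (gcancel_r (h:=f)). rewrite H, ginv_l. reflexivity.
Qed.

Lemma ginv_ginv (C : Groupoid) (x y : gob C) (f : ghom x y) : ginv (ginv f) = f.
Proof. apply ginv_unique. apply ginv_r. Qed.

Lemma ginv_gid (C : Groupoid) (x : gob C) : ginv (gid x) = gid x.
Proof. apply ginv_unique. apply gcomp_id_l. Qed.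

Lemma ginv_comp (C : Groupoid) (x y z : gob C) (g : ghom y z) (f : ghom x y) :
  ginv (g ∘ f) = ginv f ∘ ginv g.
Proof.
  apply ginv_unique. rewrite <- gcomp_assoc, (gcomp_assoc (ginv g)), ginv_l,
  gcomp_id_l, ginv_l. reflexivity.
Qed.

Lemma gl_rw (C : Groupoid) (x y z : gob C) (h : ghom y z) (g : ghom x y) (k : ghom x z) :
  g = ginv h ∘ k -> h ∘ g = k.
Proof. intros ->. rewrite gcomp_assoc, ginv_r, gcomp_id_l. reflexivity. Qed.

Lemma gr_rw (C : Groupoid) (x y z : gob C) (h : ghom y z) (g : ghom x y) (k : ghom x z) :
  h = k ∘ ginv g -> h ∘ g = k.
Proof. intros ->. rewrite <- gcomp_assoc, ginv_l, gcomp_id_r. reflexivity. Qed.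

Lemma ginv_l_r (C : Groupoid) (x y z : gob C) (h : ghom x y) (r : ghom z x) :
  ginv h ∘ (h ∘ r) = r.
Proof. rewrite gcomp_assoc, ginv_l, gcomp_id_l. reflexivity. Qed.
Lemma ginv_r_r (C : Groupoid) (x y z : gob C) (h : ghom y x) (r : ghom z x) :
  h ∘ (ginv h ∘ r) = r.
Proof. rewrite gcomp_assoc, ginv_r, gcomp_id_l. reflexivity. Qed.

Lemma hc2_inv (B : Bigroupoid) (A X C : Ob B) (g g' : gob (Hom X C)) (f f' : gob (Hom A X))
  (b : ghom g g') (a : ghom f f') : hc2 (ginv b) (ginv a) = ginv (hc2 b a).
Proof.
  symmetry. apply ginv_unique. rewrite <- hc2_comp, !ginv_l. apply hc2_id.
Qed.

Lemma hc2_compl (B : Bigroupoid) (A X C : Ob B) (g g' g'' : gob (Hom X C)) (f : gob (Hom A X))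
  (b' : ghom g' g'') (b : ghom g g') :
  hc2 (b' ∘ b) (gid f) = hc2 b' (gid f) ∘ hc2 b (gid f).
Proof. rewrite <- hc2_comp, gcomp_id_l. reflexivity. Qed.

Lemma hc2_compr (B : Bigroupoid) (A X C : Ob B) (g : gob (Hom X C)) (f f' f'' : gob (Hom A X))
  (a' : ghom f' f'') (a : ghom f f') :
  hc2 (gid g) (a' ∘ a) = hc2 (gid g) a' ∘ hc2 (gid g) a.
Proof. rewrite <- hc2_comp, gcomp_id_l. reflexivity. Qed.

Lemma hc2_split (B : Bigroupoid) (A X C : Ob B) (g g' : gob (Hom X C)) (f f' : gob (Hom A X))
  (b : ghom g g') (a : ghom f f') :
  hc2 b a = hc2 b (gid f') ∘ hc2 (gid g) a.
Proof. rewrite <- hc2_comp, gcomp_id_l, gcomp_id_r. reflexivity. Qed.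

Lemma hc2_split' (B : Bigroupoid) (A X C : Ob B) (g g' : gob (Hom X C)) (f f' : gob (Hom A X))
  (b : ghom g g') (a : ghom f f') :
  hc2 b a = hc2 (gid g') a ∘ hc2 b (gid f).
Proof. rewrite <- hc2_comp, gcomp_id_l, gcomp_id_r. reflexivity. Qed.

Lemma lwhisk_inj (B : Bigroupoid) (A X : Ob B) (f f' : gob (Hom A X)) (a a' : ghom f f') :
  hc2 (gid (one X)) a = hc2 (gid (one X)) a' -> a = a'.
Proof.
  intro H. apply (gcancel_r (h := lu f)). rewrite <- !lu_nat, H. reflexivity.
Qed.

Lemma rwhisk_inj (B : Bigroupoid) (A X : Ob B) (f f' : gob (Hom A X)) (a a' : ghom f f') :
  hc2 a (gid (one A)) = hc2 a' (gid (one A)) -> a = a'.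
Proof.
  intro H. apply (gcancel_r (h := ru f)). rewrite <- !ru_nat, H. reflexivity.
Qed.

Lemma kelly1 (B : Bigroupoid) (A X C : Ob B) (g : gob (Hom X C)) (f : gob (Hom A X)) :
  hc2 (lu g) (gid f) = lu (hc g f) ∘ assoc (one C) g f.
Proof.
  apply lwhisk_inj.
  apply (gcancel_r (h := assoc (one C) (hc (one C) g) f ∘ hc2 (assoc (one C) (one C) g) (gid f))).
  transitivity (hc2 (gid (one C)) (lu (hc g f)) ∘
     (hc2 (gid (one C)) (assoc (one C) g f) ∘ (assoc (one C) (hc (one C) g) f ∘ hc2 (assoc (one C) (one C) g) (gid f)))).
  2: { rewrite hc2_compr. rewrite !gcomp_assoc. reflexivity. }
  rewrite pentagon, (gcomp_assoc (hc2 (gid (one C)) (lu (hc g f)))), triangle.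
  rewrite <- (hc2_id g f), <- assoc_nat.
  rewrite <- triangle, hc2_compl, (gcomp_assoc (assoc (one C) g f)).
  rewrite (assoc_nat (gid (one C)) (lu g) (gid f)).
  rewrite !gcomp_assoc. reflexivity.
Qed.

Lemma kelly2 (B : Bigroupoid) (A X C : Ob B) (g : gob (Hom X C)) (f : gob (Hom A X)) :
  ru (hc g f) = hc2 (gid g) (ru f) ∘ assoc g f (one A).
Proof.
  apply rwhisk_inj.
  apply (gcancel_l (h := assoc g f (one A))).
  rewrite <- triangle, gcomp_assoc, <- (hc2_id g f), assoc_nat.
  rewrite <- (gcomp_assoc (hc2 (gid g) (hc2 (gid f) (lu (one A))))), <- pentagon.
  rewrite (gcomp_assoc (hc2 (gid g) (hc2 (gid f) (lu (one A))))), <- hc2_compr, triangle.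
  rewrite (gcomp_assoc (hc2 (gid g) (hc2 (ru f) (gid (one A))))).
  rewrite <- (assoc_nat (gid g) (ru f) (gid (one A))).
  rewrite <- gcomp_assoc, <- hc2_compl. reflexivity.
Qed.

Lemma kelly3 (B : Bigroupoid) (A : Ob B) : lu (one A) = ru (one A).
Proof.
  apply rwhisk_inj.
  rewrite kelly1, <- triangle.
  f_equal. apply (gcancel_l (h := lu (one A))).
  rewrite lu_nat. reflexivity.
Qed.

Lemma rw2 (C : Groupoid) (w x y z : gob C) (a : ghom y z) (b : ghom x y) (c : ghom x z)
  (H : a ∘ b = c) (r : ghom w x) : a ∘ (b ∘ r) = c ∘ r.
Proof. rewrite gcomp_assoc, H. reflexivity. Qed.

Ltac gsimp := repeat progress (rewrite ?ginv_comp, <- ?gcomp_assoc, ?ginv_l_r, ?ginv_r_r,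
   ?ginv_l, ?ginv_r, ?gcomp_id_l, ?gcomp_id_r, ?ginv_ginv, ?ginv_gid).

Lemma hc2_merge (B : Bigroupoid) (A X C : Ob B) (g g' g'' : gob (Hom X C)) (f f' f'' : gob (Hom A X))
  (b' : ghom g' g'') (b : ghom g g') (a' : ghom f' f'') (a : ghom f f') (W : gob (Hom A C))
  (r : ghom W (hc g f)) :
  hc2 b' a' ∘ (hc2 b a ∘ r) = hc2 (b' ∘ b) (a' ∘ a) ∘ r.
Proof. rewrite hc2_comp, gcomp_assoc. reflexivity. Qed.

Lemma hc2_compL (B : Bigroupoid) (A X C : Ob B) (g g' g'' : gob (Hom X C)) (f f' : gob (Hom A X))
  (b' : ghom g' g'') (b : ghom g g') (a : ghom f f') :
  hc2 (b' ∘ b) a = hc2 b' (gid f') ∘ hc2 b a.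
Proof. rewrite <- hc2_comp, gcomp_id_l. reflexivity. Qed.

Lemma hc2_compR (B : Bigroupoid) (A X C : Ob B) (g g' : gob (Hom X C)) (f f' f'' : gob (Hom A X))
  (b : ghom g g') (a' : ghom f' f'') (a : ghom f f') :
  hc2 b (a' ∘ a) = hc2 (gid g') a' ∘ hc2 b a.
Proof. rewrite <- hc2_comp, gcomp_id_l. reflexivity. Qed.

Lemma hc2_compL' (B : Bigroupoid) (A X C : Ob B) (g g' g'' : gob (Hom X C)) (f f' : gob (Hom A X))
  (b' : ghom g' g'') (b : ghom g g') (a : ghom f f') :
  hc2 (b' ∘ b) a = hc2 b' a ∘ hc2 b (gid f).
Proof. rewrite <- hc2_comp, gcomp_id_r. reflexivity. Qed.

Lemma ru_nat_inv (B : Bigroupoid) (A X : Ob B) (f f' : gob (Hom A X)) (a : ghom f f') :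
  hc2 a (gid (one A)) ∘ ginv (ru f) = ginv (ru f') ∘ a.
Proof. apply (gcancel_l (h := ru f')). gsimp. rewrite (rw2 (ru_nat a)). gsimp. reflexivity. Qed.

Lemma rw4 (C : Groupoid) (v w x y z u : gob C) (a : ghom y z) (b : ghom x y) (c : ghom w x) (d : ghom v w)
  (e : ghom v z) (H : a ∘ (b ∘ (c ∘ d)) = e) (r : ghom u v) : a ∘ (b ∘ (c ∘ (d ∘ r))) = e ∘ r.
Proof. rewrite <- H, !gcomp_assoc. reflexivity. Qed.

Lemma ru_one (B : Bigroupoid) (A X : Ob B) (f : gob (Hom A X)) :
  hc2 (ru f) (gid (one A)) = ru (hc f (one A)).
Proof. apply (gcancel_l (h := ru f)). apply ru_nat. Qed.

Lemma lu_nat_inv (B : Bigroupoid) (A X : Ob B) (f f' : gob (Hom A X)) (a : ghom f f') :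
  hc2 (gid (one X)) a ∘ ginv (lu f) = ginv (lu f') ∘ a.
Proof. apply (gcancel_l (h := lu f')). gsimp. rewrite (rw2 (lu_nat a)). gsimp. reflexivity. Qed.


Unset Implicit Arguments.
Inductive path (B : Bigroupoid) : Ob B -> Ob B -> Type :=
| pnil : forall X, path B X X
| pcons : forall X Y Z, gob (Hom (b0:=B) Y Z) -> path B X Y -> path B X Z.
Arguments pnil {B} X.
Arguments pcons {B X Y Z} g p.
Set Implicit Arguments.
Unset Strict Implicit.

Fixpoint eval {B : Bigroupoid} {X Y : Ob B} (p : path B X Y) : gob (Hom X Y) :=
  match p with
  | pnil X => one X
  | pcons g q => hc g (eval q)
  end.

Fixpoint app {B : Bigroupoid} {X Y Z : Ob B} (q : path B Y Z) : path B X Y -> path B X Z :=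
  match q in path _ Y Z return path B X Y -> path B X Z with
  | pnil _ => fun p => p
  | pcons g q' => fun p => pcons g (app q' p)
  end.

Fixpoint mu {B : Bigroupoid} {X Y Z : Ob B} (q : path B Y Z) :
  forall p : path B X Y, ghom (hc (eval q) (eval p)) (eval (app q p)) :=
  match q in path _ Y Z return forall p : path B X Y, ghom (hc (eval q) (eval p)) (eval (app q p)) with
  | pnil _ => fun p => lu (eval p)
  | pcons g q' => fun p => hc2 (gid g) (mu q' p) ∘ assoc g (eval q') (eval p)
  end.

Lemma app_nil (B : Bigroupoid) (X Y : Ob B) (p : path B X Y) : app p (pnil X) = p.
Proof. induction p; simpl; [reflexivity | rewrite IHp; reflexivity]. Qed.

Lemma app_assoc (B : Bigroupoid) (A X C D : Ob B) (r : path B C D) (q : path B X C) (p : path B A X) :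
  app (app r q) p = app r (app q p).
Proof. induction r; simpl; [reflexivity | rewrite IHr; reflexivity]. Qed.

Definition ecell {B : Bigroupoid} {X Y : Ob B} {p q : path B X Y} (e : p = q) :
  ghom (eval p) (eval q) := cell_of_eq (f_equal eval e).

Lemma ecell_refl (B : Bigroupoid) (X Y : Ob B) (p : path B X Y) (e : p = p) : ecell e = gid (eval p).
Proof. rewrite (proof_irrelevance _ e eq_refl). reflexivity. Qed.

Lemma ecell_cons (B : Bigroupoid) (X Y Z : Ob B) (g : gob (Hom Y Z)) (p q : path B X Y)
  (e : p = q) (e' : pcons g p = pcons g q) : ecell e' = hc2 (gid g) (ecell e).
Proof. destruct e. rewrite !ecell_refl. symmetry. apply hc2_id. Qed.

Lemma C1 (B : Bigroupoid) (A X C D : Ob B) (r : path B C D) (q : path B X C) (p : path B A X)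
  (e : app (app r q) p = app r (app q p)) :
  mu r (app q p) ∘ (hc2 (gid (eval r)) (mu q p) ∘ assoc (eval r) (eval q) (eval p))
  = ecell e ∘ (mu (app r q) p ∘ hc2 (mu r q) (gid (eval p))).
Proof.
  revert q p e. induction r as [D | C' D' D g r IH]; intros q p e; simpl in *.
  - rewrite ecell_refl, gcomp_id_l, gcomp_assoc, lu_nat, <- gcomp_assoc, <- kelly1.
    reflexivity.
  - rewrite (ecell_cons (app_assoc r q p) e).
    transitivity (hc2 (gid g) (mu r (app q p) ∘ (hc2 (gid (eval r)) (mu q p) ∘ assoc (eval r) (eval q) (eval p)))
      ∘ (assoc g (hc (eval r) (eval q)) (eval p) ∘ hc2 (assoc g (eval r) (eval q)) (gid (eval p)))).
    + rewrite !hc2_compr, <- !gcomp_assoc. f_equal.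
      rewrite pentagon, <- (hc2_id g (eval r)).
      rewrite (rw2 (assoc_nat (gid g) (gid (eval r)) (mu q p))), <- !gcomp_assoc. reflexivity.
    + rewrite (IH q p (app_assoc r q p)), !hc2_compr, hc2_compl, <- !gcomp_assoc.
      rewrite (rw2 (assoc_nat (gid g) (mu r q) (gid (eval p)))), <- !gcomp_assoc. reflexivity.
Qed.

Lemma C2 (B : Bigroupoid) (X Y : Ob B) (p : path B X Y) (e : app p (pnil X) = p) :
  ecell e ∘ mu p (pnil X) = ru (eval p).
Proof.
  revert e. induction p as [Y | X' Y' Z g p IH]; intro e; simpl in *.
  - rewrite ecell_refl, gcomp_id_l. apply kelly3.
  - rewrite (ecell_cons (app_nil p) e), gcomp_assoc, <- hc2_compr, (IH (app_nil p)).
    symmetry. apply kelly2.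
Qed.

Lemma C2' (B : Bigroupoid) (X Y : Ob B) (p : path B X Y) (e : app p (pnil X) = p) :
  ecell e = ru (eval p) ∘ ginv (mu p (pnil X)).
Proof. rewrite <- (C2 e). gsimp. reflexivity. Qed.

Lemma C1' (B : Bigroupoid) (A X C D : Ob B) (r : path B C D) (q : path B X C) (p : path B A X)
  (e : app (app r q) p = app r (app q p)) :
  ecell e = mu r (app q p) ∘ (hc2 (gid (eval r)) (mu q p) ∘ (assoc (eval r) (eval q) (eval p)
     ∘ ginv (mu (app r q) p ∘ hc2 (mu r q) (gid (eval p))))).
Proof.
  apply (gcancel_r (h := mu (app r q) p ∘ hc2 (mu r q) (gid (eval p)))).
  rewrite <- (C1 e). gsimp. reflexivity.
Qed.

Lemma mu_single (B : Bigroupoid) (X Y Z : Ob B) (g : gob (Hom Y Z)) (p : path B X Y) :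
  mu (pcons g (pnil Y)) p = hc2 (ru g) (gid (eval p)).
Proof. simpl. apply triangle. Qed.


Definition SH (B : Bigroupoid) (X Y : Ob B) : Groupoid.
Proof.
  refine {| gob := path B X Y; ghom := fun p q => ghom (eval p) (eval q);
            gcomp := fun _ _ _ g f => gcomp g f; gid := fun p => gid (eval p);
            ginv := fun _ _ f => ginv f |}.
  - intros; apply gcomp_assoc.
  - intros; apply gcomp_id_l.
  - intros; apply gcomp_id_r.
  - intros; apply ginv_l.
  - intros; apply ginv_r.
Defined.

Lemma cellSH (B : Bigroupoid) (X Y : Ob B) (p q : path B X Y) (e : p = q) :
  cell_of_eq (C := @SH B X Y) e = ecell e.
Proof. destruct e. reflexivity. Qed.


Definition shc2 {B : Bigroupoid} {A X C : Ob B} {g g' : path B X C} {f f' : path B A X}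
  (b : ghom (eval g) (eval g')) (a : ghom (eval f) (eval f')) : ghom (eval (app g f)) (eval (app g' f')) :=
  mu g' f' ∘ (hc2 b a ∘ ginv (mu g f)).

Definition sinv1 {B : Bigroupoid} {X Y : Ob B} (p : path B X Y) : path B Y X :=
  pcons (inv1 (eval p)) (pnil Y).

Definition sco {B : Bigroupoid} {X Y : Ob B} (p : path B X Y) : ghom (one Y) (eval (app p (sinv1 p))) :=
  mu p (sinv1 p) ∘ (hc2 (gid (eval p)) (ginv (ru (inv1 (eval p)))) ∘ co (eval p)).

Lemma shc2_mu (B : Bigroupoid) (A X C : Ob B) (g g' : path B X C) (f f' : path B A X)
  (b : ghom (eval g) (eval g')) (a : ghom (eval f) (eval f')) (W : gob (Hom A C)) (r : ghom W (hc (eval g) (eval f))) :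
  shc2 b a ∘ (mu g f ∘ r) = mu g' f' ∘ (hc2 b a ∘ r).
Proof. unfold shc2. gsimp. reflexivity. Qed.

Lemma shc2_mu0 (B : Bigroupoid) (A X C : Ob B) (g g' : path B X C) (f f' : path B A X)
  (b : ghom (eval g) (eval g')) (a : ghom (eval f) (eval f')) :
  shc2 b a ∘ mu g f = mu g' f' ∘ hc2 b a.
Proof. unfold shc2. gsimp. reflexivity. Qed.

Lemma shc2_id (B : Bigroupoid) (A X C : Ob B) (g : path B X C) (f : path B A X) :
  shc2 (gid (eval g)) (gid (eval f)) = gid (eval (app g f)).
Proof. unfold shc2. rewrite hc2_id. gsimp. reflexivity. Qed.

Lemma shc2_comp (B : Bigroupoid) (A X C : Ob B) (g g' g'' : path B X C) (f f' f'' : path B A X)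
  (b' : ghom (eval g') (eval g'')) (b : ghom (eval g) (eval g'))
  (a' : ghom (eval f') (eval f'')) (a : ghom (eval f) (eval f')) :
  shc2 (b' ∘ b) (a' ∘ a) = shc2 b' a' ∘ shc2 b a.
Proof. unfold shc2. rewrite hc2_comp. gsimp. reflexivity. Qed.

Lemma sassoc_nat (B : Bigroupoid) (A X C D : Ob B) (h h' : path B C D) (g g' : path B X C)
  (f f' : path B A X) (c : ghom (eval h) (eval h')) (b : ghom (eval g) (eval g')) (a : ghom (eval f) (eval f'))
  (e : app (app h g) f = app h (app g f)) (e' : app (app h' g') f' = app h' (app g' f')) :
  ecell e' ∘ shc2 (shc2 c b) a = shc2 c (shc2 b a) ∘ ecell e.
Proof.
  apply (gcancel_r (h := mu (app h g) f ∘ hc2 (mu h g) (gid (eval f)))).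
  rewrite <- (gcomp_assoc (shc2 c (shc2 b a))), <- (C1 e).
  rewrite <- !gcomp_assoc, shc2_mu, <- hc2_comp, gcomp_id_r, shc2_mu0.
  rewrite hc2_compL.
  rewrite (gcomp_assoc (mu (app h' g') f')), (gcomp_assoc (ecell e')), <- (C1 e').
  rewrite shc2_mu, hc2_merge, gcomp_id_r, shc2_mu0, hc2_compR.
  rewrite <- !gcomp_assoc, assoc_nat. reflexivity.
Qed.

Lemma slu_nat (B : Bigroupoid) (A X : Ob B) (f f' : path B A X) (a : ghom (eval f) (eval f')) :
  gid (eval f') ∘ shc2 (g := pnil X) (g' := pnil X) (gid (one X)) a = a ∘ gid (eval f).
Proof. unfold shc2; simpl. gsimp. rewrite (rw2 (lu_nat a)). gsimp. reflexivity. Qed.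

Lemma sru_nat (B : Bigroupoid) (A X : Ob B) (f f' : path B A X) (a : ghom (eval f) (eval f')) :
  cell_of_eq (C := @SH B A X) (app_nil f') ∘ shc2 (f := pnil A) (f' := pnil A) a (gid (one A))
  = a ∘ cell_of_eq (C := @SH B A X) (app_nil f).
Proof.
  rewrite !cellSH, !C2'. unfold shc2. cbn [SH gcomp]. gsimp. rewrite (rw2 (ru_nat a)). gsimp. reflexivity.
Qed.

Lemma sev_nat (B : Bigroupoid) (X Y : Ob B) (f f' : path B X Y) (a : ghom (eval f) (eval f')) :
  ev (eval f') ∘ shc2 (g := sinv1 f) (g' := sinv1 f') (hc2 (inv2 a) (gid (one Y))) a
  = gid (one X) ∘ ev (eval f).
Proof.
  unfold shc2, sinv1. rewrite !mu_single. cbn [SH gcomp gid ginv eval app]. gsimp.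
  rewrite hc2_merge, ru_nat, gcomp_id_l, hc2_compL'. gsimp.
  rewrite ev_nat. apply gcomp_id_l.
Qed.

Lemma sco_nat (B : Bigroupoid) (X Y : Ob B) (f f' : path B X Y) (a : ghom (eval f) (eval f')) :
  sco f' ∘ gid (one Y) = shc2 (f := sinv1 f) (f' := sinv1 f') a (hc2 (inv2 a) (gid (one Y))) ∘ sco f.
Proof.
  unfold sco. rewrite gcomp_id_r, shc2_mu. unfold sinv1. simpl. rewrite hc2_merge, gcomp_id_r.
  rewrite ru_nat_inv, hc2_compR, <- gcomp_assoc, <- co_nat, gcomp_id_r. reflexivity.
Qed.

Lemma ecell_trans (B : Bigroupoid) (X Y : Ob B) (p q r : path B X Y) (e1 : q = r) (e2 : p = q) :
  ecell e1 ∘ ecell e2 = ecell (eq_trans e2 e1).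
Proof. destruct e1, e2. simpl. apply gcomp_id_l. Qed.

Lemma shc2_gid_ecell (B : Bigroupoid) (A X C : Ob B) (g : path B X C) (f f' : path B A X) (e : f = f') :
  shc2 (gid (eval g)) (ecell e) = ecell (f_equal (app g) e).
Proof. destruct e. apply shc2_id. Qed.

Lemma shc2_ecell_gid (B : Bigroupoid) (A X C : Ob B) (g g' : path B X C) (f : path B A X) (e : g = g') :
  shc2 (ecell e) (gid (eval f)) = ecell (f_equal (fun x => app x f) e).
Proof. destruct e. apply shc2_id. Qed.

Lemma ecell_pi (B : Bigroupoid) (X Y : Ob B) (p q : path B X Y) (e1 e2 : p = q) :
  ecell e1 = ecell e2.
Proof. rewrite (proof_irrelevance _ e1 e2). reflexivity. Qed.

Lemma spentagon (B : Bigroupoid) (A X C D E : Ob B) (k : path B D E) (h : path B C D) (g : path B X C) (f : path B A X) :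
  shc2 (gid (eval k)) (cell_of_eq (C := @SH B A D) (app_assoc h g f))
  ∘ (cell_of_eq (C := @SH B A E) (app_assoc k (app h g) f)
     ∘ shc2 (cell_of_eq (C := @SH B X E) (app_assoc k h g)) (gid (eval f)))
  = cell_of_eq (C := @SH B A E) (app_assoc k h (app g f)) ∘ cell_of_eq (C := @SH B A E) (app_assoc (app k h) g f).
Proof.
  rewrite !cellSH, shc2_gid_ecell, shc2_ecell_gid. cbn [SH gcomp]. rewrite !ecell_trans. apply ecell_pi.
Qed.

Lemma striangle (B : Bigroupoid) (A X C : Ob B) (g : path B X C) (f : path B A X) :
  shc2 (g := g) (f := app (pnil X) f) (gid (eval g)) (gid (eval f)) ∘ cell_of_eq (C := @SH B A C) (app_assoc g (pnil X) f)
  = shc2 (cell_of_eq (C := @SH B X C) (app_nil g)) (gid (eval f)).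
Proof.
  rewrite !cellSH, shc2_id, shc2_ecell_gid. cbn [SH gcomp]. rewrite gcomp_id_l. apply ecell_pi.
Qed.

Lemma mu_sinv1 (B : Bigroupoid) (A X Y : Ob B) (f : path B X Y) (p : path B A Y) :
  mu (sinv1 f) p = hc2 (ru (inv1 (eval f))) (gid (eval p)).
Proof. apply mu_single. Qed.

Lemma szigzag (B : Bigroupoid) (X Y : Ob B) (f : path B X Y) :
  cell_of_eq (C := @SH B X Y) (app_nil f)
  ∘ (shc2 (g := f) (f := app (sinv1 f) f) (f' := pnil X) (gid (eval f)) (ev (eval f))
     ∘ (cell_of_eq (C := @SH B X Y) (app_assoc f (sinv1 f) f)
        ∘ shc2 (g := pnil Y) (g' := app f (sinv1 f)) (f := f) (f' := f) (sco f) (gid (eval f)))) = gid (eval f).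
Proof.
  rewrite !cellSH, C2', C1'. unfold shc2, sco. rewrite !mu_sinv1. unfold sinv1. simpl.
  gsimp. rewrite hc2_compL'. gsimp. rewrite hc2_compL'. gsimp.
  rewrite (rw2 (assoc_nat (gid (eval f)) (ginv (ru (inv1 (eval f)))) (gid (eval f)))).
  gsimp. rewrite (hc2_merge (gid (eval f)) (gid (eval f)) (hc2 (ru (inv1 (eval f))) (gid (eval f))) (hc2 (ginv (ru (inv1 (eval f)))) (gid (eval f)))). rewrite <- hc2_comp, ginv_r, !gcomp_id_l, !hc2_id, gcomp_id_l.
  rewrite (rw4 (zigzag (eval f))). apply ginv_r.
Qed.

Definition SB (B : Bigroupoid) : Bigroupoid.
Proof.
  refine {| Ob := Ob B; Hom := @SH B;
    hc := fun A X C g f => app g f;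
    hc2 := fun A X C g g' f f' b a => shc2 b a;
    one := fun A => pnil A;
    inv1 := fun A X p => sinv1 p;
    inv2 := fun A X f f' a => hc2 (inv2 a) (gid (one X));
    assoc := fun A X C D h g f => cell_of_eq (C := @SH B A D) (app_assoc h g f);
    lu := fun A X f => gid (eval f);
    ru := fun A X f => cell_of_eq (C := @SH B A X) (app_nil f);
    ev := fun A X f => ev (eval f);
    co := fun A X f => sco f |}.
  - intros; apply shc2_id.
  - intros; apply shc2_comp.
  - intros; cbn. rewrite inv2_id. apply hc2_id.
  - intros; cbn. rewrite inv2_comp. apply hc2_compl.
  - intros. rewrite !cellSH. apply sassoc_nat.
  - intros. apply slu_nat.
  - intros. apply sru_nat.
  - intros. apply sev_nat.
  - intros. apply sco_nat.
  - intros. apply spentagon.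
  - intros. apply striangle.
  - intros. apply szigzag.
Defined.

Lemma SB_AU (B : Bigroupoid) : IsAU (SB B).
Proof.
  split; [|split].
  - intros. exists (app_assoc h g f). reflexivity.
  - intros. exists eq_refl. reflexivity.
  - intros. exists (app_nil f). reflexivity.
Qed.


Definition evalF (B : Bigroupoid) (X Y : Ob B) : Functor (@SH B X Y) (Hom X Y).
Proof. refine (@Build_Functor (@SH B X Y) (Hom X Y) (fun p => eval p) (fun p q b => b) _ _); reflexivity. Defined.

Definition singF (B : Bigroupoid) (X Y : Ob B) : Functor (Hom X Y) (@SH B X Y).
Proof.
  refine (@Build_Functor (Hom X Y) (@SH B X Y) (fun g => pcons g (pnil X)) (fun g g' b => hc2 b (gid (one X))) _ _).
  - intros. apply hc2_id.
  - intros. apply hc2_compl.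
Defined.

Lemma sing_equiv1 (B : Bigroupoid) (X Y : Ob B) :
  inhabited (NatIso (comp_functor (singF X Y) (evalF X Y)) (id_functor (@SH B X Y))).
Proof.
  constructor. refine (@Build_NatIso (@SH B X Y) (@SH B X Y) (comp_functor (singF X Y) (evalF X Y)) (id_functor (@SH B X Y)) (fun p : path B X Y => ru (eval p)) _).
  intros. apply ru_nat.
Qed.

Lemma sing_equiv2 (B : Bigroupoid) (X Y : Ob B) :
  inhabited (NatIso (comp_functor (evalF X Y) (singF X Y)) (id_functor (Hom X Y))).
Proof.
  constructor. refine (@Build_NatIso (Hom X Y) (Hom X Y) (comp_functor (evalF X Y) (singF X Y)) (id_functor (Hom X Y)) (fun g => ru g) _).
  intros. apply ru_nat.
Qed.

Definition Emor (B : Bigroupoid) : Morphism (SB B) B.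
Proof.
  refine (@Build_Morphism (SB B) B (fun X => X) (@evalF B)
    (fun X Y Z (g : path B Y Z) (f : path B X Y) => mu g f) _
    (fun X => gid (one X)) (fun X Y (f : path B X Y) => ginv (ru (inv1 (eval f)))) _ _ _ _ _ _).
  - intros. apply shc2_mu0.
  - intros. apply ru_nat_inv.
  - intros. cbn. rewrite cellSH. symmetry. apply C1.
  - intros. cbn. rewrite hc2_id, gcomp_id_r, cellSH. apply C2.
  - intros. cbn. rewrite hc2_id, gcomp_id_r. apply gcomp_id_l.
  - intros. cbn. rewrite triangle, <- hc2_comp, ginv_r, gcomp_id_l, hc2_id, gcomp_id_r, gcomp_id_l.
    reflexivity.
  - intros. cbn. unfold sco. rewrite gcomp_id_r. reflexivity.
Defined.

Lemma E_weq (B : Bigroupoid) : IsWeakEquivalence (Emor B).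
Proof.
  split.
  - intro Y. exists Y. constructor. exact (one Y).
  - intros X X'. exists (@singF B X X'). split; [apply (@sing_equiv1 B) | apply (@sing_equiv2 B)].
Qed.

Definition Smor (B : Bigroupoid) : Morphism B (SB B).
Proof.
  refine (@Build_Morphism B (SB B) (fun X => X) (@singF B)
    (fun X Y Z (g : gob (Hom Y Z)) (f : gob (Hom X Y)) =>
       (ginv (ru (hc g f)) ∘ hc2 (gid g) (ru f) : ghom (hc g (hc f (one X))) (hc (hc g f) (one X)))) _
    (fun X => ginv (ru (one X)))
    (fun X Y (f : gob (Hom X Y)) => hc2 (inv2 (ru f)) (gid (one Y))) _ _ _ _ _ _).
  - intros. cbn. unfold shc2. rewrite !mu_single. cbn.
    apply (gcancel_r (h := hc2 (ru g) (gid (hc f (one X))))). gsimp.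
    rewrite (rw2 (ru_nat_inv (hc2 b a))). gsimp. rewrite <- !hc2_comp. f_equal. f_equal.
    + rewrite !gcomp_id_l, ru_nat. reflexivity.
    + rewrite gcomp_id_r, gcomp_id_l, ru_nat. reflexivity.
  - intros. cbn. rewrite <- !hc2_compl, <- !inv2_comp, ru_nat. reflexivity.
  - intros. cbn. rewrite cellSH, ecell_refl. unfold shc2. simpl. rewrite !triangle.
    gsimp. rewrite <- !hc2_inv, !ginv_gid.
    rewrite (rw2 (ru_nat_inv (assoc h g f))).
    rewrite <- !hc2_comp, !hc2_merge. gsimp.
    rewrite (rw2 (assoc_nat (gid h) (ru g) (ru f))). gsimp.
    rewrite <- hc2_comp. gsimp. rewrite <- hc2_comp. gsimp. reflexivity.
  - intros. cbn. rewrite cellSH, ecell_refl. unfold shc2. simpl. rewrite !triangle.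
    gsimp. rewrite <- ?hc2_inv, ?ginv_gid.
    rewrite ru_one, ginv_r_r, !hc2_merge, <- hc2_comp. gsimp. apply hc2_id.
  - intros. cbn. unfold shc2. simpl. rewrite !triangle.
    gsimp. rewrite <- ?hc2_inv, ?ginv_gid.
    rewrite (hc2_merge (ru (one Y)) (ginv (ru (one Y)))), ginv_r, gcomp_id_l, hc2_id, gcomp_id_l.
    rewrite lu_nat_inv, (rw2 (ru_nat_inv (lu f))). gsimp. reflexivity.
  - intros. cbn. unfold shc2. simpl. rewrite !triangle.
    gsimp. rewrite <- ?hc2_inv, ?ginv_gid.
    rewrite (rw2 (ru_nat_inv (ev f))), !hc2_merge, <- hc2_comp. gsimp.
    rewrite (rw2 (ru_nat _)). gsimp. rewrite ev_nat, gcomp_id_l. reflexivity.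
  - intros. cbn. unfold shc2, sco, sinv1. simpl. rewrite !triangle.
    gsimp. rewrite <- ?hc2_inv, ?ginv_gid.
    rewrite ru_nat_inv, !hc2_merge. gsimp. rewrite (rw2 (ru_nat _)). gsimp.
    rewrite <- co_nat, gcomp_id_r. reflexivity.
Defined.

Lemma S_weq (B : Bigroupoid) : IsWeakEquivalence (Smor B).
Proof.
  split.
  - intro Y. exists Y. constructor. exact (@pnil B Y).
  - intros X X'. exists (@evalF B X X'). split; [apply (@sing_equiv2 B) | apply (@sing_equiv1 B)].
Qed.

Theorem lemmaB2 :
  forall B : Bigroupoid,
    exists (SB : Bigroupoid) (E : Morphism SB B) (S : Morphism B SB),
      IsAU SB /\ IsWeakEquivalence E /\ IsWeakEquivalence S.
Proof.
  intro B. exists (SB B), (Emor B), (Smor B).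
  split; [apply SB_AU | split; [apply E_weq | apply S_weq]].
Qed.
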